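(* Let $(G,t)$ be a non-trivial problem instance, $X$ a modulator of $G$, $C$ a connected component of $G-X$, $T$ the block-cut tree of $C$, and $B$ a block of $C$ that is a leaf of $T$ with unique neighbour $a$ in $T$. Let $W=N_G(V(B)\setminus\{a\})\setminus\{a\}$. Suppose $W$ is a limit-1 subset for $(G-V(B),t)$ and every $x\in W$ satisfies $\mathrm{tw}\big(G[V(B)\cup\{x\}]\cup\{ax\}\big)\le 2$. Let $G'$ be obtained from $G$ by contracting $B$ into $a$ (replacing $V(B)$ by the single vertex $a$ adjacent to all of $N_G(V(B))$). Then $(G,t)$ has a solution if and only if $(G',t)$ has a solution.
   Context: $\mathrm{tw}$ is treewidth. A solution for $(G,t)$ is $S\subseteq V(G)$ with $|S|\le t$ and $\mathrm{tw}(G-S)\le 2$. A modulator of $G$ is $X$ with $\mathrm{tw}(G-X)\le 2$. $Z$ is a limit-1 subset for $(G,t)$ if every solution $S$ has $|Z\setminus S|\le 1$. $(G,t)$ is trivial if $|V(G)|\le 4$, or $\mathrm{tw}(G)\le 2$, or $t=0$, or some connected subgraph $H$ satisfies $\mathrm{tw}\big(G[N_G[H]]\cup\binom{N_G(H)}{2}\big)\le 2$ ($N_G(H)$: vertices outside $H$ adjacent to $H$; $N_G[H]=V(H)\cup N_G(H)$; $\cup\binom{N_G(H)}{2}$ adds all edges among $N_G(H)$); otherwise non-trivial. For $U\subseteq V(G)$, $N_G(U)$ is the set of vertices outside $U$ adjacent to $U$. A block of a connected graph is a maximal biconnected subgraph (biconnected = connected without articulation vertex); the block-cut tree of a connected graph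 $C$ is the bipartite tree whose nodes are the articulation vertices of $C$ and the blocks of $C$, with articulation vertex $a$ adjacent to block $B$ iff $a\in V(B)$. For a graph $F$ and vertex pair $ax$, $F\cup\{ax\}$ is $F$ with edge $ax$ added. *)

(* Defs.v *)
From mathcomp Require Import all_boot.
Set Implicit Arguments. Unset Strict Implicit. Unset Printing Implicit Defensive.

Section Graphs.
Variable T : finType.

(* A graph: a vertex set and a relation; its (simple, undirected) edge set is
   the symmetric closure of the relation restricted to distinct vertices. *)
Record sgraph := SGraph { verts : {set T}; rel_of : rel T }.

Definition edge (G : sgraph) (x y : T) : bool :=
  [&& x \in verts G, y \in verts G, x != y & (rel_of G x y || rel_of G y x)].

Definition induced (G : sgraph) (S : {set T}) : sgraph :=
  SGraph (verts G :&: S) (rel_of G).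
Definition delete (G : sgraph) (S : {set T}) : sgraph :=
  SGraph (verts G :\: S) (rel_of G).
Definition add_edges (G : sgraph) (P : rel T) : sgraph :=
  SGraph (verts G) (fun x y => rel_of G x y || P x y).

Definition nbh (G : sgraph) (U : {set T}) : {set T} :=
  [set y in verts G :\: U | [exists x in U, edge G x y]].
Definition cnbh (G : sgraph) (U : {set T}) : {set T} := U :|: nbh G U.

Definition connected (G : sgraph) : Prop :=
  verts G != set0 /\
  forall x y, x \in verts G -> y \in verts G -> connect (edge G) x y.

Definition articulation (H : sgraph) (v : T) : Prop :=
  v \in verts H /\
  exists x y, [/\ x \in verts H :\ v, y \in verts H :\ v &
                  ~~ connect (edge (delete H [set v])) x y].

Definition biconnected (H : sgraph) : Prop :=
  connected H /\ forall v, ~ articulation H v.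

(* the vertex set of a block of the connected graph G[C]: a maximal
   biconnected subgraph (maximal biconnected subgraphs are induced, so they
   are determined by their vertex set) *)
Definition block (G : sgraph) (C B : {set T}) : Prop :=
  B \subset C /\ biconnected (induced G B) /\
  forall B' : {set T}, B \proper B' -> B' \subset C -> ~ biconnected (induced G B').

Definition component (G : sgraph) (C : {set T}) : Prop :=
  C \subset verts G /\ connected (induced G C) /\ nbh G C = set0.

(* In the block-cut tree of the connected graph G[C], the block B is a leaf
   whose unique neighbour is the articulation vertex a: the neighbours of B
   in the block-cut tree are exactly the articulation vertices of G[C]
   lying in B. *)
Definition bc_leaf (G : sgraph) (C B : {set T}) (a : T) : Prop :=
  [/\ block G C B, articulation (induced G C) a, a \in B &
      forall a', articulation (induced G C) a' -> a' \in B -> a' = a].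

End Graphs.

Definition is_tree (I : finType) (r : rel I) : Prop :=
  [/\ 0 < #|I|, symmetric r, irreflexive r,
      forall i j, connect r i j &
      #|[set p : I * I | r p.1 p.2]| = 2 * (#|I| - 1)].

Section Treewidth.
Variable T : finType.

Definition tree_decomposition (G : sgraph T) (I : finType) (r : rel I)
    (bag : I -> {set T}) : Prop :=
  [/\ is_tree r,
      forall i, bag i \subset verts G,
      forall v, v \in verts G -> exists i, v \in bag i,
      forall x y, edge G x y -> exists i, (x \in bag i) && (y \in bag i) &
      forall v i j, v \in bag i -> v \in bag j ->
        connect [rel k l | [&& r k l, v \in bag k & v \in bag l]] i j].

Definition tw_le (G : sgraph T) (k : nat) : Prop :=
  exists (I : finType) (r : rel I) (bag : I -> {set T}),
    tree_decomposition G r bag /\ forall i, #|bag i| <= k.+1.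

Definition solution (G : sgraph T) (t : nat) (S : {set T}) : Prop :=
  [/\ S \subset verts G, #|S| <= t & tw_le (delete G S) 2].

Definition modulator (G : sgraph T) (X : {set T}) : Prop :=
  X \subset verts G /\ tw_le (delete G X) 2.

Definition limit1 (G : sgraph T) (t : nat) (Z : {set T}) : Prop :=
  forall S, solution G t S -> #|Z :\: S| <= 1.

(* (G,t) is trivial; a connected subgraph H is represented by its vertex set U
   (only V(H) matters for N_G(H), N_G[H]) *)
Definition trivial_instance (G : sgraph T) (t : nat) : Prop :=
  [\/ #|verts G| <= 4, tw_le G 2, t = 0 |
      exists U : {set T}, [/\ U \subset verts G, connected (induced G U) &
        tw_le (add_edges (induced G (cnbh G U))
                 (fun x y => (x \in nbh G U) && (y \in nbh G U))) 2]].

Definition contract (G : sgraph T) (VB : {set T}) (a : T) : sgraph T :=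
  SGraph ((verts G :\: VB) :|: [set a])
    (fun x y => [&& rel_of G x y, x \notin VB & y \notin VB]
                || ((x == a) && (y \in nbh G VB))).

End Treewidth.

(* Main.v *)
Require Import Defs.
From mathcomp Require Import all_boot zify.
Set Implicit Arguments. Unset Strict Implicit. Unset Printing Implicit Defensive.

Lemma connect_map (A B : finType) (e : rel A) (e' : rel B) (f : A -> B) :
  (forall x y, e x y -> e' (f x) (f y)) ->
  forall x y, connect e x y -> connect e' (f x) (f y).
Proof.
move=> He x y /connectP [p pth ->]. elim: p x pth => [|z p IH] x /=.
  by move=> _; rewrite connect0.
case/andP => exz pth. exact: connect_trans (connect1 (He _ _ exz)) (IH _ pth).
Qed.

Section G.
Variable T : finType.
Implicit Types (G H : sgraph T) (S U : {set T}).

Lemma edgeC G x y : edge G x y = edge G y x.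
Proof.
rewrite /edge; apply/idP/idP => /and4P[h1 h2 h3 h4]; apply/and4P; split => //;
  by [rewrite eq_sym | rewrite orbC].
Qed.

Lemma edge_verts G x y : edge G x y -> (x \in verts G) && (y \in verts G).
Proof. by case/and4P => -> ->. Qed.

Lemma edge_delete G S x y : edge (delete G S) x y = [&& x \notin S, y \notin S & edge G x y].
Proof.
rewrite /edge /= !inE.
by case: (x \in S); case: (y \in S); case: (x \in verts G); case: (y \in verts G).
Qed.

Lemma edge_induced G S x y : edge (induced G S) x y = [&& x \in S, y \in S & edge G x y].
Proof.
rewrite /edge /= !inE.
by case: (x \in S); case: (y \in S); case: (x \in verts G); case: (y \in verts G).
Qed.

Lemma tw_sub H H' k : verts H \subset verts H' ->
  (forall x y, edge H x y -> edge H' x y) -> tw_le H' k -> tw_le H k.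
Proof.
move=> sV sE [I [r [bag [[tr Hsub Hcov Hed Hcon] Hsz]]]].
exists I, r, (fun i => bag i :&: verts H); split.
- split => //.
  + move=> i; exact: subsetIr.
  + move=> v vH; have [i vi] := Hcov v (subsetP sV v vH). by exists i; rewrite inE vi.
  + move=> x y exy. have [i /andP[xi yi]] := Hed _ _ (sE _ _ exy).
    case/andP: (edge_verts exy) => xH yH.
    by exists i; rewrite !inE xi yi xH yH.
  + move=> v i j; rewrite !inE => /andP[vi vH] /andP[vj _].
    apply: (connect_map (f := id) _ (Hcon v i j vi vj)) => k1 l1 /=.
    by rewrite !inE vH !andbT.
- move=> i; apply: leq_trans (Hsz i); apply: subset_leq_card; exact: subsetIl.
Qed.
End G.

Section C.
Variable T : finType.
Implicit Types (G H : sgraph T) (S U : {set T}).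

Lemma tw_contract H U a k : U \subset verts H -> connected (induced H U) -> a \in U ->
  tw_le H k -> tw_le (contract H U a) k.
Proof.
move=> UV [_ Uconn] aU [I [r [bag [[tr Hsub Hcov Hed Hcon] Hsz]]]].
pose bag' i := if U :&: bag i != set0 then (bag i :\: U) :|: [set a] else bag i.
have memb v i : (v \in bag' i) =
   if v \in U then (v == a) && (U :&: bag i != set0) else v \in bag i.
  rewrite /bag'; case: ifP => h; rewrite ?inE.
    case vU: (v \in U) => /=; first by rewrite andbT.
    case: eqP => [va|_]; first by move: vU; rewrite va aU.
    by rewrite orbF.
  case vU: (v \in U) => //; rewrite andbF.
  apply/negbTE/negP => vb; move/negbT: h; rewrite negbK => /eqP h.
  by have := in_set0 v; rewrite -h inE vU vb.
have aV : a \in verts H by exact: subsetP UV a aU.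
have memU v i : v \in U -> v \in bag i -> a \in bag' i.
  move=> vU vb; rewrite memb aU eqxx /=; apply/set0Pn; exists v; by rewrite inE vU vb.
have key : forall p u i j, u \in U -> path (edge (induced H U)) u p ->
    u \in bag i -> last u p \in bag j ->
    connect [rel k l | [&& r k l, a \in bag' k & a \in bag' l]] i j.
  elim => [|z p IH] u i j uU /=.
    move=> _ ui uj; apply: (connect_map (f := id) _ (Hcon u i j ui uj)) => k1 l1 /=.
    by case/and3P => -> /(memU _ _ uU) -> /(memU _ _ uU) ->.
  case/andP => euz pth ui zj.
  move: euz; rewrite edge_induced => /and3P[_ zU euz].
  have [m /andP[um zm]] := Hed _ _ euz.
  apply: connect_trans (IH z m j zU pth zm zj).
  apply: (connect_map (f := id) _ (Hcon u i m ui um)) => k1 l1 /=.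
  by case/and3P => -> /(memU _ _ uU) -> /(memU _ _ uU) ->.
exists I, r, bag'; split; last first.
  move=> i; rewrite /bag'; case: ifP => h; last exact: Hsz.
  apply: leq_trans (Hsz i).
  rewrite cardsU cards1 cardsD.
  have : 0 < #|bag i :&: U| by rewrite card_gt0 setIC.
  have := subset_leq_card (subsetIl (bag i) U). lia.
split => //.
- move=> i; apply/subsetP => v; rewrite memb !inE.
  case vU: (v \in U) => /=; first by case/andP => /eqP ->; rewrite eqxx ?orbT.
  idtac.
  by move/(subsetP (Hsub i)) => ->.
- move=> v; rewrite !inE => /orP[/andP[vU vV]|/eqP ->].
    have [i vi] := Hcov v vV; exists i; by rewrite memb (negbTE vU).
  have [i ai] := Hcov a aV; exists i; exact: memU ai.
- have side x y : x \in verts (contract H U a) -> y \in verts (contract H U a) ->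
     ([&& rel_of H x y, x \notin U & y \notin U] || (x == a) && (y \in nbh H U)) ->
     x != y -> exists i, (x \in bag' i) && (y \in bag' i).
    rewrite !inE => xV yV /orP[/and3P[rxy xU yU]|/andP[/eqP -> yN]] nxy.
      have vV z : z \notin U -> (z \notin U) && (z \in verts H) || (z == a) -> z \in verts H.
        move=> zU /orP[/andP[]//|/eqP za]; by move: zU; rewrite za aU.
      have xV' := vV x xU xV. have yV' := vV y yU yV.
      have exy : edge H x y by rewrite /edge xV' yV' nxy rxy.
      have [i /andP[xi yi]] := Hed _ _ exy.
      by exists i; rewrite !memb (negbTE xU) (negbTE yU) xi yi.
    move: yN => /andP[/andP[yU yV'] /existsP[u /andP[uU euy]]].
    have [i /andP[ui yi]] := Hed _ _ euy.
    by exists i; rewrite (memU _ _ uU ui) memb (negbTE yU) yi.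
  move=> x y /and4P[xV yV nxy /orP[h|h]]; first exact: side.
  have [i /andP[yi xi]] := side y x yV xV h ltac:(by rewrite eq_sym).
  by exists i; rewrite xi yi.
- move=> v i j; case vU: (v \in U).
    rewrite !memb vU /= => /andP[/eqP va /set0Pn[u uI]] /andP[_ /set0Pn[w wI]]; subst v.
    move: uI wI; rewrite !inE => /andP[uU ui] /andP[wU wj].
    have /connectP[p pth wl] : connect (edge (induced H U)) u w.
      by apply: Uconn; rewrite inE ?uU ?wU (subsetP UV).
    by apply: (key p u) => //; rewrite -wl.
  rewrite !memb vU => vi vj.
  apply: (connect_map (f := id) _ (Hcon v i j vi vj)) => k1 l1 /=.
  by rewrite !memb vU.
Qed.
End C.

Section Gl.
Variable T : finType.
Implicit Types (G H : sgraph T) (S U K : {set T}).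

Definition glueG H1 H2 := SGraph (verts H1 :|: verts H2) (fun x y => edge H1 x y || edge H2 x y).

Lemma edge_glue H1 H2 x y : edge H1 x y || edge H2 x y -> edge (glueG H1 H2) x y.
Proof.
case/orP => e; have := e; case/and4P => xV yV nxy _;
  by rewrite /edge /= !inE xV yV nxy e ?orbT.
Qed.

Section Sum.
Variables (I1 I2 : finType) (r1 : rel I1) (r2 : rel I2) (i1 : I1) (i2 : I2).
Definition sumr (p q : I1 + I2) : bool :=
  match p, q with
  | inl i, inl j => r1 i j
  | inr i, inr j => r2 i j
  | inl i, inr j => (i == i1) && (j == i2)
  | inr j, inl i => (i == i1) && (j == i2)
  end.

Lemma sum_tree : is_tree r1 -> is_tree r2 -> is_tree sumr.
Proof.
move=> [n1 s1 ir1 c1 e1] [n2 s2 ir2 c2 e2]; split.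
- by rewrite card_sum addn_gt0 n1.
- by case=> [i|i] [j|j] //=; rewrite ?s1 ?s2.
- by case=> [i|i] /=; rewrite ?ir1 ?ir2.
- have L1 i j : connect sumr (inl i) (inl j).
    exact: (connect_map (f := inl) _ (c1 i j)).
  have L2 i j : connect sumr (inr i) (inr j).
    exact: (connect_map (f := inr) _ (c2 i j)).
  have E12 : sumr (inl i1) (inr i2) by rewrite /= !eqxx.
  have E21 : sumr (inr i2) (inl i1) by rewrite /= !eqxx.
  case=> [i|i] [j|j]; rewrite ?L1 ?L2 //.
    exact: connect_trans (L1 i i1) (connect_trans (connect1 E12) (L2 i2 j)).
  exact: connect_trans (L2 i i2) (connect_trans (connect1 E21) (L1 i1 j)).
- pose f1 (p : I1 * I1) := (@inl I1 I2 p.1, @inl I1 I2 p.2).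
  pose f2 (p : I2 * I2) := (@inr I1 I2 p.1, @inr I1 I2 p.2).
  have if1 : injective f1 by case=> [x y] [x' y'] [-> ->].
  have if2 : injective f2 by case=> [x y] [x' y'] [-> ->].
  have ne12 z w : (@inl I1 I2 z == inr w) = false by [].
  have ne21 z w : (@inr I1 I2 z == inl w) = false by [].
  have -> : [set p : (I1 + I2) * (I1 + I2) | sumr p.1 p.2] =
     (f1 @: [set p | r1 p.1 p.2] :|: f2 @: [set p | r2 p.1 p.2])
       :|: [set (inl i1, inr i2); (inr i2, inl i1)].
    apply/setP => -[[x|x] [y|y]]; rewrite !inE /=.
    - rewrite (mem_imset _ (x, y) if1) inE /=.
      have -> : (inl x, inl y) \in f2 @: [set p | r2 p.1 p.2] = false.
        by apply/negbTE/imsetP => -[[u v] _ []].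
      by rewrite !xpair_eqE /= ?ne12 ?ne21 ?andbF ?orbF.
    - have -> : (inl x, inr y) \in f2 @: [set p | r2 p.1 p.2] = false.
        by apply/negbTE/imsetP => -[[u v] _ []].
      have -> : (inl x, inr y) \in f1 @: [set p | r1 p.1 p.2] = false.
        by apply/negbTE/imsetP => -[[u v] _ []].
      by rewrite !xpair_eqE /= ?ne12 ?ne21 ?andbF ?orbF ?andbT.
    - have -> : (inr x, inl y) \in f2 @: [set p | r2 p.1 p.2] = false.
        by apply/negbTE/imsetP => -[[u v] _ []].
      have -> : (inr x, inl y) \in f1 @: [set p | r1 p.1 p.2] = false.
        by apply/negbTE/imsetP => -[[u v] _ []].
      by rewrite !xpair_eqE /= ?ne12 ?ne21 ?andbF ?orbF ?andbT andbC.
    - rewrite (mem_imset _ (x, y) if2) inE /=.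
      have -> : (inr x, inr y) \in f1 @: [set p | r1 p.1 p.2] = false.
        by apply/negbTE/imsetP => -[[u v] _ []].
      by rewrite !xpair_eqE /= ?ne12 ?ne21 ?andbF ?orbF ?andbT.
  rewrite cardsU cardsU !card_imset // e1 e2 cards2 card_sum.
  have -> : f1 @: [set p | r1 p.1 p.2] :&: f2 @: [set p | r2 p.1 p.2] = set0.
    apply/setP => -[x y]; rewrite !inE; apply/negbTE/andP => -[/imsetP[[u v] _ []] -> ->].
    by case/imsetP => -[u' v'] _ [].
  have -> : (f1 @: [set p | r1 p.1 p.2] :|: f2 @: [set p | r2 p.1 p.2])
           :&: [set (inl i1, inr i2); (inr i2, inl i1)] = set0.
    apply/setP => -[x y]; rewrite !inE; apply/negbTE/andP => -[].
    case/orP => /imsetP[[u v] _ []] -> ->; by rewrite !xpair_eqE ?ne12 ?ne21 ?andbF.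
  rewrite !cards0 /=. have ar x y : 0 < x -> 0 < y -> 2 * (x - 1) + 2 * (y - 1) - 0 + 2 - 0 = 2 * (x + y - 1) by lia. exact: ar n1 n2.
Qed.
End Sum.

Definition tdK H k K := exists (I : finType) (r : rel I) (bag : I -> {set T}),
  [/\ tree_decomposition H r bag, forall i, #|bag i| <= k.+1 & exists i, K \subset bag i].

Lemma tw_glue H1 H2 K k : tdK H1 k K -> tdK H2 k K ->
  (forall v, v \in verts H1 -> v \in verts H2 -> v \in K) ->
  tw_le (glueG H1 H2) k.
Proof.
move=> [I1 [r1 [b1 [[t1 S1 C1 E1 N1] Z1 [i1 K1]]]]].
move=> [I2 [r2 [b2 [[t2 S2 C2 E2 N2] Z2 [i2 K2]]]]] HK.
pose bag (p : I1 + I2) := match p with inl i => b1 i | inr j => b2 j end.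
exists (I1 + I2)%type, (sumr r1 r2 i1 i2), bag; split; last by case.
split.
- exact: sum_tree.
- case=> i /=; apply: subset_trans (S1 i) _ || apply: subset_trans (S2 i) _.
    exact: subsetUl.
  exact: subsetUr.
- move=> v; rewrite inE => /orP[/C1 [i vi]|/C2 [i vi]]; by [exists (inl i) | exists (inr i)].
- move=> x y; rewrite /edge /= => /and4P[_ _ _].
  case/orP => /orP[e|e].
  + by have [i h] := E1 _ _ e; exists (inl i).
  + by have [i h] := E2 _ _ e; exists (inr i).
  + by have [i /andP[h1 h2]] := E1 _ _ e; exists (inl i); rewrite /= h1 h2.
  + by have [i /andP[h1 h2]] := E2 _ _ e; exists (inr i); rewrite /= h1 h2.
- have L1 v i j : connect [rel k l | [&& r1 k l, v \in b1 k & v \in b1 l]] i j ->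
     connect [rel k l | [&& sumr r1 r2 i1 i2 k l, v \in bag k & v \in bag l]] (inl i) (inl j).
    by apply: (connect_map (f := inl)).
  have L2 v i j : connect [rel k l | [&& r2 k l, v \in b2 k & v \in b2 l]] i j ->
     connect [rel k l | [&& sumr r1 r2 i1 i2 k l, v \in bag k & v \in bag l]] (inr i) (inr j).
    by apply: (connect_map (f := inr)).
  have cross v : v \in K -> (v \in b1 i1) && (v \in b2 i2).
    by move=> vK; rewrite (subsetP K1) ?(subsetP K2).
  move=> v [i|i] [j|j] /= vi vj.
  + exact: L1 (N1 v i j vi vj).
  + have /cross /andP[v1 v2] := HK v (subsetP (S1 i) v vi) (subsetP (S2 j) v vj).
    apply: connect_trans (L1 _ _ _ (N1 v i i1 vi v1)) _.
    apply: connect_trans (L2 _ _ _ (N2 v i2 j v2 vj)).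
    by apply: connect1; rewrite /= !eqxx v1 v2.
  + have /cross /andP[v1 v2] := HK v (subsetP (S1 j) v vj) (subsetP (S2 i) v vi).
    apply: connect_trans (L2 _ _ _ (N2 v i i2 vi v2)) _.
    apply: connect_trans (L1 _ _ _ (N1 v i1 j v1 vj)).
    by apply: connect1; rewrite /= !eqxx v1 v2.
  + exact: L2 (N2 v i j vi vj).
Qed.

Lemma tdK_of H k K : tw_le H k ->
  (K = set0 \/ (exists x, K = [set x] /\ x \in verts H) \/
   exists x y, K = [set x; y] /\ edge H x y) -> tdK H k K.
Proof.
move=> [I [r [bag [td Z]]]] hK; exists I, r, bag; split => //.
case: td => [[n _ _ _ _] _ Cv Ed _].
case: hK => [->|[[x [-> xV]]|[x [y [-> e]]]]].
- have /card_gt0P[i _] := n; by exists i; rewrite sub0set.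
- have [i xi] := Cv x xV; by exists i; rewrite sub1set.
- have [i /andP[xi yi]] := Ed x y e; exists i.
  by rewrite subUset !sub1set xi yi.
Qed.
End Gl.

Section H.
Variable T : finType.
Implicit Types (G H : sgraph T) (S U K : {set T}).

Lemma inN G U y : (y \in nbh G U) = [&& y \notin U, y \in verts G & [exists x in U, edge G x y]].
Proof. by rewrite !inE -andbA. Qed.

Lemma edge_add G U (P : rel T) x y : x \in U -> y \in U -> edge G x y ->
  edge (add_edges (induced G U) P) x y.
Proof.
rewrite /edge /= !inE => xU yU /and4P[xV yV nxy e]; rewrite xU yU xV yV nxy /=.
by case/orP: e => ->; rewrite ?orbT.
Qed.

Lemma edge_addE G (P : rel T) x y : edge (add_edges G P) x y =
  [&& x \in verts G, y \in verts G, x != y & (rel_of G x y || rel_of G y x) || (P x y || P y x)].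
Proof.
rewrite /edge /=; case: (rel_of G x y); case: (rel_of G y x); case: (P x y); case: (P y x);
  by rewrite ?orbT ?orbF.
Qed.

Lemma small_set K : #|K| <= 1 -> K = set0 \/ exists x, K = [set x].
Proof.
move=> h; have : (#|K| == 0) || (#|K| == 1) by case: #|K| h => [|[|]].
case/orP => [/eqP/cards0_eq ->|/cards1P]; by [left | right].
Qed.
End H.

Theorem mainTheorem16 (T : finType) (G : sgraph T) (t : nat)
    (X C B : {set T}) (a : T) :
  ~ trivial_instance G t ->
  modulator G X ->
  component (delete G X) C ->
  bc_leaf G C B a ->
  limit1 (delete G B) t (nbh G (B :\ a) :\ a) ->
  (forall x, x \in nbh G (B :\ a) :\ a ->
     tw_le (add_edges (induced G (B :|: [set x]))
              (fun u w => (u == a) && (w == x))) 2) ->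
  ((exists S, solution G t S) <-> (exists S, solution (contract G B a) t S)).
Proof.
move=> _ [XV twX] [CV _] [[BC [BconnG _]] _ aB _] Hlim Htw.
have BV' v : v \in B -> (v \in verts G) && (v \notin X).
  move=> vB; have := subsetP CV v (subsetP BC v vB); by rewrite inE andbC.
have BV v : v \in B -> v \in verts G by move/BV'/andP=> [].
have BX v : v \in B -> v \notin X by move/BV'/andP=> [].
have aV := BV a aB.
set W := nbh G (B :\ a) :\ a in Hlim Htw *.
have inW y : y \in W = [&& y != a, y \notin B, y \in verts G & [exists x in B :\ a, edge G x y]].
  rewrite /W inE inN !inE; by case: (y == a); case: (y \in B).
have WB y : y \in W -> y \notin B by rewrite inW => /and4P[].
have WV y : y \in W -> y \in verts G by rewrite inW => /and4P[].
have Wa y : y \in W -> y != a by rewrite inW => /and4P[].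
have WN y : y \in W -> y \in nbh G B.
  rewrite inW inN => /and4P[_ -> -> /existsP[x /andP[xB e]]] /=.
  by apply/existsP; exists x; move: xB; rewrite !inE => /andP[_ ->].
have toW u v : u \in B -> u != a -> v \notin B -> edge G u v -> v \in W.
  move=> uB ua vB e; rewrite inW vB (andP (edge_verts e)).2 /=.
  apply/andP; split; first by apply: contraNneq vB => ->.
  by apply/existsP; exists u; rewrite !inE ua uB e.
clearbody W.
split.
- move=> [S [SV Ssz Stw]].
  case: (boolP (B :&: S == set0)) => hBS.
  + have nBS v : v \in S -> v \notin B.
      move=> vS; apply/negP => vB; move/eqP: hBS => /setP /(_ v).
      by rewrite !inE vB vS.
    exists S; split => //.
      apply/subsetP => v vS; rewrite !inE (nBS v vS) (subsetP SV v vS); done.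
    apply: (tw_sub (H' := contract (delete G S) B a)).
    * apply/subsetP => v; rewrite !inE; by case: (v \in S); case: (v \in B); case: (v == a).
    * have hN z : z \notin S -> z \in nbh G B -> z \in nbh (delete G S) B.
        move=> zS; rewrite !inN => /and3P[-> zV /existsP[u /andP[uB eu]]].
        rewrite /= inE zS zV /=; apply/existsP; exists u.
        have uS : u \notin S by apply/negP => /nBS; rewrite uB.
        by rewrite uB edge_delete zS eu uS.
      have hR u w : w \notin S ->
          ([&& rel_of G u w, u \notin B & w \notin B] || (u == a) && (w \in nbh G B)) ->
          ([&& rel_of G u w, u \notin B & w \notin B] || (u == a) && (w \in nbh (delete G S) B)).
        move=> wS /orP[->//|/andP[-> /(hN _ wS) ->]]; by rewrite orbT.
      move=> x y; rewrite edge_delete => /and3P[xS yS] /and4P[xV yV nxy e].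
      apply/and4P; split => //.
      - by move: xV; rewrite !inE xS; case: (x \in B); case: (x == a).
      - by move: yV; rewrite !inE yS; case: (y \in B); case: (y == a).
      - by case/orP: e => [/(hR _ _ yS) | /(hR _ _ xS)] /= ->; rewrite ?orbT.
    * apply: tw_contract => //.
      - apply/subsetP => v vB; rewrite inE BV // andbT.
        by apply/negP => /nBS; rewrite vB.
      - have -> : induced (delete G S) B = induced G B.
          rewrite /induced /=; congr SGraph; apply/setP => v; rewrite !inE.
          case vB: (v \in B); rewrite ?andbF //= andbT.
          case vS: (v \in S) => /=; last by rewrite andbT. by move: (nBS v vS); rewrite vB.
        exact: BconnG.1.
  + exists (a |: (S :\: B)); split.
    * apply/subsetP => v; rewrite !inE => /orP[->|/andP[vB vS]]; first by rewrite orbT.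
      by rewrite vB (subsetP SV v vS).
    * rewrite cardsU1 cardsD.
      have : 0 < #|S :&: B| by rewrite card_gt0 setIC.
      have := subset_leq_card (subsetIl S B).
      have := leq_b1 (a \notin S :\: B). lia.
    * apply: (tw_sub (H' := delete G S)) => //.
      - apply/subsetP => v; rewrite !inE.
        case: (v \in S); case: (v \in B); case: (v == a). all: rewrite ?orbT ?andbF ?orbF /=. all: try done.
      - move=> x y; rewrite !edge_delete !inE => /and3P[xS yS].
        rewrite /edge /= !inE => /and4P[xV yV nxy e].
        move: xS yS; rewrite !negb_or => /andP[xa xS] /andP[ya yS].
        move: xV yV; rewrite (negbTE xa) (negbTE ya) !orbF => /andP[xB xV] /andP[yB yV].
        rewrite xV yV nxy /=; move: xS yS; rewrite xB yB /= => -> -> /=.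
        by move: e; rewrite (negbTE xa) (negbTE ya) /= xB yB !orbF !andbT.
- move=> [S [SV Ssz Stw]].
  have SV1 v : v \in S -> v \in verts G.
    move/(subsetP SV); rewrite !inE => /orP[/andP[_ ->]|/eqP ->] //.
  have SB v : v \in S -> v \in B -> v = a.
    move/(subsetP SV); rewrite !inE => /orP[/andP[/negP nB _] /nB //|/eqP ->] //.
  have sol0 : solution (delete G B) t (S :\ a).
    split.
    + apply/subsetP => v; rewrite !inE => /andP[va vS]; rewrite SV1 // andbT.
      by apply/negP => /(SB v vS) /eqP; rewrite (negbTE va).
    + apply: leq_trans Ssz; apply: subset_leq_card; exact: subsetDl.
    + apply: (tw_sub (H' := delete (contract G B a) S)) => //.
      * apply/subsetP => v; rewrite !inE => /andP[vSa /andP[vB vV]].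
        have va : v != a by apply: contraNneq vB => ->.
        by move: vSa; rewrite va vB vV /= => ->.
      * move=> x y; rewrite !edge_delete !inE => /and3P[xS yS /and3P[xB yB /and4P[xV yV nxy e]]].
        have xa : x != a by apply: contraNneq xB => ->.
        have ya : y != a by apply: contraNneq yB => ->.
        move: xS yS; rewrite xa ya /= => xS yS.
        rewrite xS yS /edge /= !inE xB yB xV yV nxy /=.
        by case/orP: e => ->; rewrite ?orbT.
  have hW : #|W :\: S| <= 1.
    have eW : W :\: (S :\ a) = W :\: S.
      apply/setP => v; rewrite !inE; case vW: (v \in W); rewrite ?andbT ?andbF //.
      by rewrite (Wa v vW).
    by rewrite -eW; exact: (Hlim _ sol0).
  have tw0 : tw_le (delete (delete G B) (S :\ a)) 2 by case: sol0.
  exists S; split => //; first by apply/subsetP => v /SV1.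
  case: (boolP (a \in S)) => aS.
  + apply: (tw_sub (H' := glueG (delete (delete G B) (S :\ a))
                             (induced G ((B :\ a) :|: (W :\: S))))).
    * apply/subsetP => v; rewrite !inE => /andP[vS vV]; rewrite vV vS /=.
      have va : v != a by apply: contraNneq vS => ->.
      by rewrite va (negbTE vS) /=; case: (v \in B).
    * have one u w : u \notin S -> w \notin S -> edge G u w -> u \in B ->
          edge (induced G ((B :\ a) :|: (W :\: S))) u w.
        move=> uS wS e uB; rewrite edge_induced e andbT !inE.
        have ua : u != a by apply: contraNneq uS => ->.
        rewrite ua uB /=; case wB: (w \in B).
          have wa : w != a by apply: contraNneq wS => ->.
          by rewrite wa.
        by rewrite (toW u w uB ua (negbT wB) e) wS orbT.
      move=> x y; rewrite edge_delete => /and3P[xS yS e]; apply: edge_glue.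
      case xB: (x \in B); first by apply/orP; right; exact: one.
      case yB: (y \in B).
        by apply/orP; right; rewrite edgeC; apply: one => //; rewrite edgeC.
      apply/orP; left; rewrite !edge_delete e xB yB !inE /=.
      by rewrite (negbTE xS) (negbTE yS) !andbF.
    * have xV1 x : x \in W :\: S -> x \in verts (delete (delete G B) (S :\ a)).
        rewrite !inE => /andP[xS xW]; rewrite (negbTE xS) andbF (WB x xW) (WV x xW).
        done.
      have xV2 x : x \in W :\: S -> x \in verts (induced G ((B :\ a) :|: (W :\: S))).
        move=> xWS; rewrite in_setI in_setU xWS orbT andbT.
        by move: xWS; rewrite inE => /andP[_ /WV].
      apply: (tw_glue (K := W :\: S)).
      - apply: tdK_of; first exact: tw0.
        case: (small_set hW) => [->|[x E]]; [left | right; left] => //.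
        exists x; split => //; apply: xV1; by rewrite E inE.
      - apply: tdK_of.
          case: (small_set hW) => [E|[x E]]; rewrite E.
            apply: (tw_sub (H' := delete G X)) => //.
              apply/subsetP => v; rewrite !inE => /andP[vV /orP[/andP[_ vB]|]] //.
              by rewrite vV (BX v vB).
            move=> u w; rewrite edge_induced !inE edge_delete => /and3P[/orP[/andP[_ uB]|//]].
            move=> /orP[/andP[_ wB]|//] e; by rewrite (BX u uB) (BX w wB).
          have xW : x \in W by move/setP/(_ x): E; rewrite !inE eqxx => /andP[].
          apply: (tw_sub (H' := add_edges (induced G (B :|: [set x]))
                                  (fun u w => (u == a) && (w == x)))); last exact: Htw.
            apply/subsetP => v; rewrite !inE => /andP[-> /orP[/andP[_ ->]|->]] //.
            by rewrite orbT.
          move=> u w; rewrite edge_induced => /and3P[uU wU e]; apply: edge_add => //.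
            by move: uU; rewrite !inE => /orP[/andP[_ ->]|->] //; rewrite orbT.
          by move: wU; rewrite !inE => /orP[/andP[_ ->]|->] //; rewrite orbT.
        case: (small_set hW) => [->|[x E]]; [left | right; left] => //.
        exists x; split => //; apply: xV2; by rewrite E inE.
      - move=> v; rewrite !inE => /andP[vSa /andP[vB vV]] /andP[_ /orP[/andP[_ vB']|//]].
        by rewrite vB' in vB.
  + have eWS x : x \in W :\: S = (x \notin S) && (x \in W) by rewrite inE.
    have aN x : x \in nbh G B -> x \notin S -> edge (delete (contract G B a) S) a x.
      move=> xN xS; have := xN; rewrite inN => /and3P[xB xV _].
      have xa : x != a by apply: contraNneq xB => ->.
      rewrite edge_delete aS xS /edge /= [a \in _]inE [x \in _]inE in_set1 eqxx orbT /=.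
      by rewrite in_setD xB xV eq_sym xa xN /= orbT.
    apply: (tw_sub (H' := glueG (delete (contract G B a) S)
              (add_edges (induced G (B :|: (W :\: S))) (fun u w => (u == a) && (w \in W :\: S))))).
    * apply/subsetP => v; rewrite !inE => /andP[vS vV]; rewrite vS vV /=.
      by case: (v \in B); rewrite ?orbT.
    * have one u w : u \notin S -> w \notin S -> edge G u w -> u \in B ->
          edge (delete (contract G B a) S) u w ||
          edge (add_edges (induced G (B :|: (W :\: S))) (fun u w => (u == a) && (w \in W :\: S))) u w.
        move=> uS wS e uB; case wB: (w \in B).
          by rewrite edge_add ?orbT // inE ?uB ?wB.
        case: (eqVneq u a) => [ua|ua].
          subst u; rewrite aN //; rewrite inN wB (andP (edge_verts e)).2 /=.
          by apply/existsP; exists a; rewrite aB e.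
        rewrite edge_add ?orbT // !inE ?uB //.
        by rewrite (toW u w uB ua (negbT wB) e) wS orbT.
      move=> x y; rewrite edge_delete => /and3P[xS yS e]; apply: edge_glue.
      case xB: (x \in B); first exact: one.
      case yB: (y \in B).
        by rewrite edgeC [edge (add_edges _ _) x y]edgeC; apply: one => //; rewrite edgeC.
      apply/orP; left; rewrite edge_delete xS yS /edge /= !inE xB yB /=.
      case/and4P: e => -> -> -> e /=.
      by case/orP: e => ->; rewrite ?orbT.
    * have aV1 : a \in verts (delete (contract G B a) S) by rewrite !inE aS eqxx orbT.
      have aV2 : a \in verts (add_edges (induced G (B :|: (W :\: S))) (fun u w => (u == a) && (w \in W :\: S))).
        by rewrite /= !inE aV aB.
      apply: (tw_glue (K := a |: (W :\: S))).
      - apply: tdK_of => //.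
        case: (small_set hW) => [->|[x E]]; right; [left | right].
          by exists a; rewrite setU0.
        have xW : x \in W by move/setP/(_ x): E; rewrite !inE eqxx => /andP[].
        have xS : x \notin S by move/setP/(_ x): E; rewrite !inE eqxx => /andP[].
        exists a, x; rewrite E; split => //; exact: aN (WN x xW) xS.
      - apply: tdK_of.
          case: (small_set hW) => [E|[x E]]; rewrite E.
            apply: (tw_sub (H' := delete G X)) => //.
              apply/subsetP => v; rewrite !inE => /andP[vV /orP[vB|]] //.
              by rewrite vV (BX v vB).
            move=> u w; rewrite edge_addE !inE !andbF !orbF => /and4P[/andP[uV uB] /andP[wV wB] nuw e].
            by rewrite edge_delete (BX u uB) (BX w wB) /edge uV wV nuw e.
          have xW : x \in W by move/setP/(_ x): E; rewrite !inE eqxx => /andP[].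
          apply: (tw_sub (H' := add_edges (induced G (B :|: [set x]))
                                  (fun u w => (u == a) && (w == x)))); last exact: Htw.
            by [].
          by move=> u w; rewrite !edge_addE !inE.
        case: (small_set hW) => [E|[x E]]; right; [left | right].
          by exists a; rewrite E setU0; split => //; rewrite /= !inE aV aB.
        have xW : x \in W by move/setP/(_ x): E; rewrite !inE eqxx => /andP[].
        exists a, x; rewrite E; split => //.
        rewrite edge_addE /= !inE eqxx aV aB (WV x xW) (eq_sym a) (Wa x xW) !orbT.
        by rewrite eqxx !orbT.
      - move=> v; rewrite !inE => /andP[vS /orP[/andP[vB vV]|->//]] /andP[_ /orP[vB'|h]].
          by rewrite vB' in vB.
        by rewrite h orbT.
Qed.
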